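(* Assume the standing assumptions with $0\le\mu<L$. Let $k\in\mathbb N$, $R_k\in\mathbb R$, $v_k\in\mathbb R^n$, $x_k\in\operatorname{dom} g$, $\alpha_k\in(0,1)$, $\gamma_k>0$, and let $\hat\gamma_{k+1},y_k,g_k,v_{k+1},x_{k+1}$ be produced by the stepwise weak accelerated proximal gradient step. Define $\epsilon_k:=F(x_k)-F(T_L y_k)-\langle g_k,x_k-y_k\rangle-\frac1{2L}\|g_k\|^2$ and $$R_{k+1}:=\frac12\Big(L^{-1}-\frac{\alpha_k^2}{\hat\gamma_{k+1}}\Big)\|g_k\|^2+(1-\alpha_k)\Big(\epsilon_k+R_k+\frac{\mu\alpha_k\gamma_k}{2\hat\gamma_{k+1}}\|v_k-y_k\|^2\Big).$$ Then for every $x^*\in\mathbb R^n$, $$F(x_{k+1})-F(x^* )+R_{k+1}+\frac{\hat\gamma_{k+1}}2\|v_{k+1}-x^*\|^2\le(1-\alpha_k)\Big(F(x_k)-F(x^* )+R_k+\frac{\gamma_k}{2}\|v_k-x^*\|^2\Big).$$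
   Context: Standing assumptions: $f:\mathbb R^n\to\mathbb R$ is differentiable with $L$-Lipschitz gradient and $\mu$-strongly convex ($\mu\ge0$); $g:\mathbb R^n\to\mathbb R\cup\{+\infty\}$ proper, closed, convex; $F=f+g$. $T_L(y):=\operatorname{argmin}_x\{g(x)+\langle\nabla f(y),x\rangle+\frac L2\|x-y\|^2\}$, $\mathcal G_L(y):=L(y-T_L(y))$. Stepwise weak accelerated proximal gradient step: given $v_k,x_k$, $\alpha_k\in(0,1)$, $\gamma_k>0$, set $\hat\gamma_{k+1}:=(1-\alpha_k)\gamma_k+\mu\alpha_k$, $y_k:=(\gamma_k+\alpha_k\mu)^{-1}(\alpha_k\gamma_k v_k+\hat\gamma_{k+1}x_k)$, $g_k:=\mathcal G_L(y_k)$, $v_{k+1}:=\hat\gamma_{k+1}^{-1}(\gamma_k(1-\alpha_k)v_k-\alpha_k g_k+\mu\alpha_k y_k)$, $x_{k+1}:=T_L(y_k)$. *)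

(* Defs.v *)
From HB Require Import structures.
From mathcomp Require Import all_boot all_order all_algebra.
From mathcomp Require Import all_classical all_reals all_analysis.
Set Implicit Arguments. Unset Strict Implicit. Unset Printing Implicit Defensive.
Import Order.TTheory GRing.Theory Num.Theory.
Import numFieldNormedType.Exports.
Local Open Scope ring_scope.

Section Defs.
Variables (R : realType) (n : nat).
Implicit Types (u v x y : 'rV[R]_n).

Definition dotv u v : R := \sum_(i < n) u 0 i * v 0 i.
Definition sqnorm u : R := dotv u u.
Definition enorm u : R := Num.sqrt (sqnorm u).

Definition is_gradient (f : 'rV[R]_n -> R) (gradf : 'rV[R]_n -> 'rV[R]_n) :=
  forall x, differentiable f x /\ forall h, 'd f x h = dotv (gradf x) h.

Definition lipschitz_grad (gradf : 'rV[R]_n -> 'rV[R]_n) (L : R) :=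
  forall x y, enorm (gradf x - gradf y) <= L * enorm (x - y).

Definition strongly_convex (f : 'rV[R]_n -> R) (mu : R) :=
  forall x y (t : R), 0 <= t <= 1 ->
    f (t *: x + (1 - t) *: y)
      <= t * f x + (1 - t) * f y - mu / 2 * t * (1 - t) * sqnorm (x - y).

Definition proper_fun (g : 'rV[R]_n -> \bar R) :=
  (exists x, (g x < +oo)%E) /\ (forall x, (-oo < g x)%E).

Definition closed_fun (g : 'rV[R]_n -> \bar R) := lower_semicontinuous g.

Definition convex_fun (g : 'rV[R]_n -> \bar R) :=
  forall x y (t : R), 0 <= t <= 1 ->
    (g (t *: x + (1 - t) *: y)%R <= t%:E * g x + (1 - t)%:E * g y)%E.

Definition dom_fun (g : 'rV[R]_n -> \bar R) x := (g x < +oo)%E.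

Definition is_prox_grad_map (g : 'rV[R]_n -> \bar R) (gradf : 'rV[R]_n -> 'rV[R]_n)
  (L : R) (T : 'rV[R]_n -> 'rV[R]_n) :=
  forall y x,
    (g (T y) + (dotv (gradf y) (T y) + L / 2 * sqnorm (T y - y))%:E
      <= g x + (dotv (gradf y) x + L / 2 * sqnorm (x - y))%:E)%E.

Definition grad_map (L : R) (T : 'rV[R]_n -> 'rV[R]_n) y := L *: (y - T y).

End Defs.

(* Main.v *)
Require Import Defs.
From HB Require Import structures.
From mathcomp Require Import all_boot all_order all_algebra.
From mathcomp Require Import all_classical all_reals all_analysis.
From mathcomp Require Import ring lra.
Import Order.TTheory GRing.Theory Num.Theory.
Import numFieldNormedType.Exports.
Local Open Scope ring_scope.
Set Implicit Arguments. Unset Strict Implicit.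

Section V.
Variables (R : realType) (n : nat).
Implicit Types (u v w : 'rV[R]_n).
Lemma dotvC u v : dotv u v = dotv v u.
Proof. by apply: eq_bigr => i _; rewrite mulrC. Qed.
Lemma dotvDl u v w : dotv (u + v) w = dotv u w + dotv v w.
Proof. by rewrite /dotv -big_split; apply: eq_bigr => i _; rewrite !mxE mulrDl. Qed.
Lemma dotvZl (a : R) u w : dotv (a *: u) w = a * dotv u w.
Proof. by rewrite /dotv mulr_sumr; apply: eq_bigr => i _; rewrite !mxE mulrA. Qed.
Lemma dotvNl u w : dotv (- u) w = - dotv u w.
Proof. by rewrite -scaleN1r dotvZl mulN1r. Qed.
Lemma dotvBl u v w : dotv (u - v) w = dotv u w - dotv v w.
Proof. by rewrite dotvDl dotvNl. Qed.
Lemma dotvDr u v w : dotv w (u + v) = dotv w u + dotv w v.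
Proof. by rewrite dotvC dotvDl !(dotvC w). Qed.
Lemma dotvZr (a : R) u w : dotv w (a *: u) = a * dotv w u.
Proof. by rewrite dotvC dotvZl dotvC. Qed.
Lemma dotvNr u w : dotv w (- u) = - dotv w u.
Proof. by rewrite dotvC dotvNl dotvC. Qed.
Lemma dotvBr u v w : dotv w (u - v) = dotv w u - dotv w v.
Proof. by rewrite dotvC dotvBl !(dotvC w). Qed.
Lemma sqnorm_ge0 u : 0 <= sqnorm u.
Proof. by apply: sumr_ge0 => i _; rewrite -expr2 sqr_ge0. Qed.
Lemma sqnormD u v : sqnorm (u + v) = sqnorm u + 2 * dotv u v + sqnorm v.
Proof. rewrite /sqnorm !dotvDl !dotvDr (dotvC v u); ring. Qed.
Lemma sqnormZ (a : R) u : sqnorm (a *: u) = a ^+ 2 * sqnorm u.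
Proof. rewrite /sqnorm dotvZl dotvZr; ring. Qed.
Lemma sqnormB u v : sqnorm (u - v) = sqnorm u - 2 * dotv u v + sqnorm v.
Proof. rewrite /sqnorm !dotvBl !dotvBr (dotvC v u); ring. Qed.

Lemma lim_le (a b c : R) : (forall t, 0 < t <= 1 -> a <= b + t * c) -> a <= b.
Proof.
move=> H; case: (lerP c 0) => hc.
  have := H 1; rewrite ltr01 lexx => /(_ isT); nra.
case: (lerP a b) => // hab; exfalso.
have hd : 0 < a - b + c by lra.
have := H ((a - b) / (a - b + c)).
have ht : 0 < (a - b) / (a - b + c) <= 1.
  apply/andP; split; first by apply: divr_gt0; lra.
  by rewrite ler_pdivrMr //; lra.
move=> /(_ ht).
have -> : b + (a - b) / (a - b + c) * c = b + ((a - b) * c) / (a - b + c) by rewrite mulrAC.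
rewrite -subr_ge0 => h.
have : 0 <= (b + (a - b) * c / (a - b + c) - a) * (a - b + c) by apply: mulr_ge0; lra.
rewrite mulrBl mulrDl mulfVK ?gt_eqF //. nra.
Qed.
Lemma dot_bound (a d : 'rV[R]_n) (c : R) : 0 < c -> sqnorm a <= c^+2 * sqnorm d ->
  dotv a d <= c * sqnorm d /\ - (c * sqnorm d) <= dotv a d.
Proof.
move=> hc ha.
have h1 := sqnorm_ge0 (a - c *: d); rewrite sqnormB sqnormZ dotvZr in h1.
have h2 := sqnorm_ge0 (a + c *: d); rewrite sqnormD sqnormZ dotvZr in h2.
split; nra.
Qed.

Lemma lip_sq (gradf : 'rV[R]_n -> 'rV[R]_n) (L : R) : lipschitz_grad gradf L -> 0 <= L ->
  forall p q, sqnorm (gradf p - gradf q) <= L^+2 * sqnorm (p - q).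
Proof.
move=> hL hL0 p q; have := hL p q; rewrite /enorm.
have := sqnorm_ge0 (gradf p - gradf q); have := sqnorm_ge0 (p - q).
set A := sqnorm _; set B := sqnorm _ => hB hA h.
rewrite -(sqr_sqrtr hA) -(sqr_sqrtr hB).
have := sqrtr_ge0 A; have := sqrtr_ge0 B. nra.
Qed.
End V.

Lemma mvt_quad (R : realType) (psi dpsi : R -> R) (K : R) :
  (forall t : R, is_derive t (1:R) psi (dpsi t)) ->
  (forall t, 0 < t < 1 -> dpsi t <= K * t) -> psi 1 - psi 0 <= K / 2.
Proof.
move=> hd hb.
pose chi := psi - (K/2) \*: ((@id R) * (@id R)).
have hc : forall t : R, is_derive t (1:R) chi (dpsi t - K * t).
  move=> t.
  have h := is_deriveB (hd t) (is_deriveZ (K/2) (is_deriveM (is_derive_id t (1:R)) (is_derive_id t (1:R)))).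
  apply: is_derive_eq.
  rewrite /GRing.scale /=. lra.
have := @MVT R chi (fun t => dpsi t - K * t) 0 1 ltr01 (fun x _ => hc x).
case.
  apply: derivable_within_continuous => x _.
  by have [] := hc x.
move=> c; rewrite in_itv /= => /andP[c0 c1].
rewrite /chi /= subr0 => e.
have := hb c; rewrite c0 c1 => /(_ isT) hbc.
have e2 : (psi 1 - K/2 * (1*1)) - (psi 0 - K/2 * (0*0)) = (dpsi c - K*c) * 1 := e.
nra.
Qed.
Lemma line_derive (R : realType) (n : nat) (f : 'rV[R]_n -> R) gradf
  (hgrad : is_gradient f gradf) (y d : 'rV[R]_n) (t : R) :
  is_derive t (1:R) (fun s : R => f (y + s *: d)) (dotv (gradf (y + t *: d)) d).
Proof.
have [hdf hd] := hgrad (y + t *: d).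
have E : (fun h : R => h^-1 *: (((fun s : R => f (y + s *: d)) \o shift t) (h *: (1:R)) - f (y + t *: d)))
   = (fun h : R => h^-1 *: ((f \o shift (y + t *: d)) (h *: d) - f (y + t *: d))).
  apply: funext => h /=; congr (_ *: (f _ - _)).
  by rewrite [h%:A]mulr1 scalerDl addrCA.
split.
  rewrite /derivable E. exact: diff_derivable.
rewrite /derive E -hd. exact: deriveE.
Qed.

Lemma descent (R : realType) (n : nat) (f : 'rV[R]_n -> R) gradf (L : R)
  (hgrad : is_gradient f gradf) (hL : lipschitz_grad gradf L) (hL0 : 0 < L)
  (y d : 'rV[R]_n) :
  f (y + d) - f y - dotv (gradf y) d <= L / 2 * sqnorm d /\
  - (L / 2 * sqnorm d) <= f (y + d) - f y - dotv (gradf y) d.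
Proof.
set c := dotv (gradf y) d.
pose psi := (fun s : R => f (y + s *: d)) - c \*: (@id R).
have hd : forall t : R, is_derive t (1:R) psi (dotv (gradf (y + t *: d)) d - c *: 1).
  move=> t; have h := is_deriveB (line_derive hgrad y d t) (is_deriveZ c (is_derive_id t (1:R))).
  exact: h.
have hb : forall t : R, 0 < t < 1 ->
    dotv (gradf (y + t *: d)) d - c *: 1 <= (L * sqnorm d) * t /\
    - ((L * sqnorm d) * t) <= dotv (gradf (y + t *: d)) d - c *: 1.
  move=> t /andP[t0 t1].
  have hl := lip_sq hL (ltW hL0) (y + t *: d) y.
  rewrite addrAC subrr add0r sqnormZ in hl.
  have hct : 0 < L * t by apply: mulr_gt0.
  have [h1 h2] := dot_bound (a := gradf (y + t *: d) - gradf y) (d := d) hct ltac:(by rewrite exprMn -mulrA).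
  rewrite dotvBl in h1 h2. rewrite /GRing.scale /= mulr1 /c. split; nra.
have e1 := mvt_quad hd (fun t ht => (hb t ht).1).
have e2 := mvt_quad (fun t => is_deriveN (hd t)) (fun t ht => ltac:(rewrite lerNl; exact: (hb t ht).2)).
have E1 : psi 1 - psi 0 = (f (y + 1 *: d) - c * 1) - (f (y + 0 *: d) - c * 0) by [].
have E2 : (- psi) 1 - (- psi) 0 = - (psi 1 - psi 0).
  have -> : (- psi) 1 = - psi 1 by []. have -> : (- psi) 0 = - psi 0 by []. lra.
rewrite E1 in e1; rewrite E2 E1 in e2.
rewrite scale1r scale0r addr0 in e1 e2.
split; lra.
Qed.

Lemma sc_first (R : realType) (n : nat) (f : 'rV[R]_n -> R) gradf (L mu : R)
  (hgrad : is_gradient f gradf) (hL : lipschitz_grad gradf L) (hL0 : 0 < L)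
  (hmu : strongly_convex f mu) (x y : 'rV[R]_n) :
  f y + dotv (gradf y) (x - y) + mu / 2 * sqnorm (x - y) <= f x.
Proof.
apply: (lim_le (c := ((L / 2 + mu / 2) * sqnorm (x - y)))) => t /andP[t0 t1].
have h1 := hmu x y t; rewrite (ltW t0) t1 in h1; have {h1} := h1 isT.
have -> : t *: x + (1 - t) *: y = y + t *: (x - y).
  by apply/rowP => i; rewrite !mxE; ring.
have [_ h2] := descent hgrad hL hL0 y (t *: (x - y)).
rewrite sqnormZ dotvZr in h2.
move=> h1.
have hq : 0 <= t * (f x + t * ((L / 2 + mu / 2) * sqnorm (x - y)) - (f y + dotv (gradf y) (x - y) + mu / 2 * sqnorm (x - y))).
  nra.
by rewrite pmulr_rge0 // subr_ge0 in hq.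
Qed.

Lemma prox_ineq (R : realType) (n : nat) (g : 'rV[R]_n -> \bar R) gradf (L : R)
  (T : 'rV[R]_n -> 'rV[R]_n) (hL0 : 0 < L)
  (hgp : proper_fun g) (hgcv : convex_fun g) (hT : is_prox_grad_map g gradf L T)
  (y x : 'rV[R]_n) (gx ga : R) :
  g x = gx%:E -> g (T y) = ga%:E ->
  ga + dotv (gradf y) (T y - x) + L * dotv (T y - y) (T y - x) <= gx.
Proof.
move=> hgx hga; set a := T y.
apply: (lim_le (c := (L / 2 * sqnorm (x - a)))) => t /andP[t0 t1].
set xt := t *: x + (1 - t) *: a.
have hc := hgcv x a t; rewrite (ltW t0) t1 in hc; have {hc} := hc isT.
rewrite hgx hga -/xt => hc.
have [gt hgt] : exists gt : R, g xt = gt%:E.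
  move: hc; have := hgp.2 xt; case: (g xt) => [r| |] //= _ _; by exists r.
have hp := hT y xt; rewrite hga hgt -/a in hp.
rewrite hgt in hc.
move: hc hp; rewrite -!EFinM -!EFinD !lee_fin => hc hp.
have E1 : xt - y = (a - y) + t *: (x - a) by apply/rowP => i; rewrite !mxE; ring.
have E2 : xt = a + t *: (x - a) by apply/rowP => i; rewrite !mxE; ring.
rewrite E1 (sqnormD (a - y)) sqnormZ dotvZr in hp.
rewrite E2 (dotvDr a) dotvZr in hp.
have E3 : a - x = - (x - a) by rewrite opprB.
rewrite E3 !dotvNr.
have hq : 0 <= t * (gx + t * (L / 2 * sqnorm (x - a)) - (ga - dotv (gradf y) (x - a) - L * dotv (a - y) (x - a))).
  nra.
rewrite pmulr_rge0 // subr_ge0 in hq. lra.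
Qed.

Lemma key_ineq (R : realType) (n : nat) (f : 'rV[R]_n -> R) gradf
  (g : 'rV[R]_n -> \bar R) (L mu : R) (T : 'rV[R]_n -> 'rV[R]_n)
  (hgrad : is_gradient f gradf) (hL : lipschitz_grad gradf L) (hL0 : 0 < L)
  (hmu : strongly_convex f mu)
  (hgp : proper_fun g) (hgcv : convex_fun g) (hT : is_prox_grad_map g gradf L T)
  (y x : 'rV[R]_n) (gx ga : R) :
  g x = gx%:E -> g (T y) = ga%:E ->
  f (T y) + ga + dotv (grad_map L T y) (x - y) + (2 * L)^-1 * sqnorm (grad_map L T y)
    + mu / 2 * sqnorm (x - y) <= f x + gx.
Proof.
move=> hgx hga.
have h1 := sc_first hgrad hL hL0 hmu x y.
have [h2 _] := descent hgrad hL hL0 y (T y - y).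
have E0 : y + (T y - y) = T y by rewrite addrC subrK.
rewrite E0 in h2.
have h3 := prox_ineq hL0 hgp hgcv hT hgx hga.
have E1 : T y - x = (T y - y) - (x - y) by rewrite opprB addrA subrK.
have E2 : grad_map L T y = (- L) *: (T y - y) by rewrite /grad_map scaleNr -scalerN opprB.
rewrite E1 (dotvBr (T y - y) (x - y) (gradf y)) (dotvBr (T y - y) (x - y) (T y - y)) in h3. rewrite E2 sqnormZ dotvZl.
have -> : (2 * L)^-1 * ((- L) ^+ 2 * sqnorm (T y - y)) = L / 2 * sqnorm (T y - y).
  by field; rewrite gt_eqF.
rewrite /sqnorm in h1 h2 h3 *. lra.
Qed.

Lemma est_identity (R : realType) (n : nat) (v xk xs G : 'rV[R]_n) (al ga mu : R) :
  ga + al * mu != 0 -> (1 - al) * ga + mu * al != 0 ->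
  let hg := (1 - al) * ga + mu * al in
  let y := (ga + al * mu)^-1 *: (al * ga *: v + hg *: xk) in
  let v1 := hg^-1 *: ((ga * (1 - al)) *: v - al *: G + (mu * al) *: y) in
  hg / 2 * sqnorm (v1 - xs) =
    (1 - al) * ga / 2 * sqnorm (v - xs) + al * mu / 2 * sqnorm (xs - y)
    + al ^+ 2 / (2 * hg) * sqnorm G - (1 - al) * mu * al * ga / (2 * hg) * sqnorm (v - y)
    + al * dotv G (xs - y) + (1 - al) * dotv G (xk - y).
Proof.
move=> h1 h2 hg y v1.
rewrite /sqnorm /dotv !mulr_sumr -!big_split -!sumrB -!big_split /=.
apply: eq_bigr => i _; rewrite /v1 /y /hg !mxE.
field. by rewrite h1 h2.
Qed.

Theorem mainTheorem4 (R : realType) (n : nat)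
  (f : 'rV[R]_n -> R) (gradf : 'rV[R]_n -> 'rV[R]_n)
  (g : 'rV[R]_n -> \bar R) (L mu : R) (T : 'rV[R]_n -> 'rV[R]_n)
  (hgrad : is_gradient f gradf) (hL : lipschitz_grad gradf L)
  (hmu : strongly_convex f mu) (hmu0 : 0 <= mu) (hmuL : mu < L)
  (hgp : proper_fun g) (hgc : closed_fun g) (hgcv : convex_fun g)
  (hT : is_prox_grad_map g gradf L T)
  (k : nat) (Rk : R) (vk xk : 'rV[R]_n) (hxk : dom_fun g xk)
  (alphak gammak : R) (halpha : 0 < alphak < 1) (hgamma : 0 < gammak) :
  let F := fun x => ((f x)%:E + g x)%E in
  let hgamma1 := (1 - alphak) * gammak + mu * alphak in
  let yk := (gammak + alphak * mu)^-1 *: (alphak * gammak *: vk + hgamma1 *: xk) in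
  let gk := grad_map L T yk in
  let vk1 := hgamma1^-1 *: ((gammak * (1 - alphak)) *: vk - alphak *: gk + (mu * alphak) *: yk) in
  let xk1 := T yk in
  let epsk := (F xk - F (T yk) - (dotv gk (xk - yk) + (2 * L)^-1 * sqnorm gk)%:E)%E in
  let Rk1 := ((2^-1 * (L^-1 - alphak ^+ 2 / hgamma1) * sqnorm gk)%:E
       + (1 - alphak)%:E * (epsk + Rk%:E
            + (mu * alphak * gammak / (2 * hgamma1) * sqnorm (vk - yk))%:E))%E in
  forall xstar : 'rV[R]_n,
    (F xk1 - F xstar + Rk1 + (hgamma1 / 2 * sqnorm (vk1 - xstar))%:E
      <= (1 - alphak)%:E * (F xk - F xstar + Rk%:E + (gammak / 2 * sqnorm (vk - xstar))%:E))%E.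
Proof.
Proof.
move=> F hg1 yk gk vk1 xk1 epsk Rk1 xs.
have hL0 : 0 < L by lra.
have [gxk hgxk] : exists r : R, g xk = r%:E.
  move: hxk; rewrite /dom_fun; have := hgp.2 xk; case: (g xk) => [r| |] //= _ _; by exists r.
have [ga hga] : exists r : R, g (T yk) = r%:E.
  have := hT yk xk; rewrite hgxk; have := hgp.2 (T yk).
  case: (g (T yk)) => [r| |] //= _ _; by exists r.
case E : (g xs) => [gs| |]; last first.
- by have := hgp.2 xs; rewrite E.
- rewrite /Rk1 /epsk /F /xk1 hgxk hga E /=.
  by rewrite addeNy !addNye leNye.
rewrite /Rk1 /epsk /F /xk1 hgxk hga E /=.
rewrite -?EFinD -?EFinN -?EFinM -?EFinD -?EFinM -?EFinD lee_fin.
have hk := key_ineq hgrad hL hL0 hmu hgp hgcv hT E hga.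
rewrite -/gk in hk.
have h1 : gammak + alphak * mu != 0 by apply: lt0r_neq0; nra.
have h2 : hg1 != 0 by apply: lt0r_neq0; rewrite /hg1; nra.
have hid := est_identity vk xk xs gk h1 h2.
rewrite /= -/hg1 -/yk -/vk1 in hid.
have hk2 := ler_wpM2l (ltW (proj1 (andP halpha))) hk.
rewrite hid.
rewrite !invfM in hk2 *.
move: halpha => /andP[a0 a1].
nra.
Qed.
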